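(* Let $d,d_\pi\ge1$, $\alpha,\beta,\beta'\in\mathbb{R}$, and let $e$ be a random transition with associated random vectors $\phi_e\in\mathbb{R}^d$ and $\Delta_e\in\mathbb{R}^d$ with $\mathbb{E}_e[\phi_e\Delta_e^\top]=-M$ for a matrix $M\in\mathbb{R}^{d\times d}$. Let $H_w\in\mathbb{R}^{d_\pi\times d}$, $H_\psi\in\mathbb{R}^{d_\pi\times d_\pi}$, and define block matrices on $\mathbb{R}^d\times\mathbb{R}^{d_\pi}$ \[B_e=\begin{pmatrix}I+\alpha\phi_e\Delta_e^\top&0\\0&I\end{pmatrix},\qquad A_0=\begin{pmatrix}(1-\beta')I&0\\\beta H_w&I+\beta H_\psi\end{pmatrix},\] and $\bar\Sigma:=\mathbb{E}_e[A_0B_e-B_eA_0]$. Then the null space of $\bar\Sigma$ contains the entire policy subspace $\{(0,x_\psi):x_\psi\in\mathbb{R}^{d_\pi}\}$.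
   Context: Setting (linear actor-critic): state $\theta=(w,\psi)\in\mathbb{R}^d\times\mathbb{R}^{d_\pi}$ in coordinates centred at an equilibrium $\theta^\star=0$. The expansion is the TD update $P_e(w,\psi)=(w+\alpha\delta(w,e)\phi(s,a),\psi)$ with TD error $\delta(w,e)=r+\gamma_{\mathrm{RL}}\phi(s',a')^\top w-\phi(s,a)^\top w$ for a transition $e=(s,a,r,s')$ (with $a'$ the next action), $\phi_e=\phi(s,a)$, $\Delta_e=\gamma_{\mathrm{RL}}\phi(s',a')-\phi_e$; thus $B_e=DP_e(\theta^\star)$. The baseline consolidation is $Q_0(w,\psi)=((1-\beta')w,\psi+\beta H(w+w^\star,\psi+\psi^\star))$ with $H(w^\star,\psi^\star)=0$, $H_w,H_\psi$ the partial Jacobians of $H$ at the equilibrium, so $A_0=DQ_0(\theta^\star)$. $\bar\Sigma$ is the first-moment commutator Jacobian. *)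

(* Defs.v *)
From HB Require Import structures.
From mathcomp Require Import all_boot all_order all_algebra.
From mathcomp Require Import all_classical all_reals all_analysis.
Set Implicit Arguments. Unset Strict Implicit. Unset Printing Implicit Defensive.
Import Order.TTheory GRing.Theory Num.Theory.
Local Open Scope ring_scope.

Definition mexpect {dT} {T : measurableType dT} {R : realType}
  (P : probability T R) {m n : nat} (X : T -> 'M[R]_(m, n)) : 'M[R]_(m, n) :=
  \matrix_(i, j) fine ('E_P[fun t => X t i j])%E.

Definition mintegrable {dT} {T : measurableType dT} {R : realType}
  (P : probability T R) {m n : nat} (X : T -> 'M[R]_(m, n)) : Prop :=
  forall i j, P.-integrable setT (fun t => (X t i j)%:E).

Definition Bmat {R : realType} {d dpi : nat} (alpha : R)
  (phi Delta : 'cV[R]_d) : 'M[R]_(d + dpi) :=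
  block_mx (1%:M + alpha *: (phi *m Delta^T)) 0 0 1%:M.

Definition A0mat {R : realType} {d dpi : nat} (beta beta' : R)
  (Hw : 'M[R]_(dpi, d)) (Hpsi : 'M[R]_dpi) : 'M[R]_(d + dpi) :=
  block_mx ((1 - beta') *: 1%:M) 0 (beta *: Hw) (1%:M + beta *: Hpsi).

Definition Sigmabar {dT} {T : measurableType dT} {R : realType}
  (P : probability T R) {d dpi : nat} (alpha beta beta' : R)
  (phi Delta : T -> 'cV[R]_d) (Hw : 'M[R]_(dpi, d)) (Hpsi : 'M[R]_dpi)
  : 'M[R]_(d + dpi) :=
  mexpect P (fun e => A0mat beta beta' Hw Hpsi *m Bmat alpha (phi e) (Delta e)
                      - Bmat alpha (phi e) (Delta e) *m A0mat beta beta' Hw Hpsi).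

(* Main.v *)
Require Import Defs.
From HB Require Import structures.
From mathcomp Require Import all_boot all_order all_algebra.
From mathcomp Require Import all_classical all_reals all_analysis.
Import Order.TTheory GRing.Theory Num.Theory.
Local Open Scope ring_scope.

Theorem theorem4p24 (R : realType) (dT : measure_display) (T : measurableType dT)
  (P : probability T R) (d dpi : nat) (hd : (1 <= d)%N) (hdpi : (1 <= dpi)%N)
  (alpha beta beta' : R) (phi Delta : T -> 'cV[R]_d) (M : 'M[R]_d)
  (Hw : 'M[R]_(dpi, d)) (Hpsi : 'M[R]_dpi)
  (hint : mintegrable P (fun e => phi e *m (Delta e)^T))
  (hM : mexpect P (fun e => phi e *m (Delta e)^T) = - M) :
  forall x : 'cV[R]_dpi,
    Sigmabar P alpha beta beta' phi Delta Hw Hpsi *m col_mx (0 : 'cV[R]_d) x = 0.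
Proof.
move=> x.
set S := Sigmabar _ _ _ _ _ _ _ _.
have pt : forall e i (k : 'I_dpi),
  (A0mat beta beta' Hw Hpsi *m Bmat alpha (phi e) (Delta e)
   - Bmat alpha (phi e) (Delta e) *m A0mat beta beta' Hw Hpsi) i (rshift d k) = 0.
  move=> e i k.
  rewrite /A0mat /Bmat !mulmx_block !block_mxEh opp_row_mx add_row_mx row_mxEr.
  rewrite !mul0mx !mulmx0 !addr0 !add0r !mulmx1 !mul1mx subrr.
  by rewrite mxE.
have hr : rsubmx S = 0.
  apply/matrixP => i k; rewrite !mxE.
  rewrite (_ : (fun t => _) = cst 0); last by apply/funext => t; exact: pt.
  by rewrite expectation_cst.
have -> : S = row_mx (lsubmx S) 0 by rewrite -hr hsubmxK.
by rewrite mul_row_col mul0mx mulmx0 addr0.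
Qed.
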